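(* Let $R$ be a $*$-ring. Then $R$ is strongly $J$-$*$-clean if and only if (1) $R$ is strongly $*$-clean; (2) $a+a^*\in J(R)$ for every $a\in R$; and (3) $J(R)=\{x\in R\mid 1+xx^*\in U(R)\}$.
   Context: All rings are associative with identity. A $*$-ring is a ring $R$ with an involution $*$, i.e. a map $a\mapsto a^*$ with $(a+b)^*=a^*+b^*$, $(ab)^*=b^*a^*$, $(a^* )^*=a$. $U(R)$ denotes the group of units and $J(R)$ the Jacobson radical of $R$. A projection is an element $e$ with $e^2=e=e^*$. $R$ is strongly $J$-$*$-clean if every $a\in R$ can be written $a=e+u$ with $e$ a projection, $u\in J(R)$ and $ae=ea$. $R$ is strongly $*$-clean if every $a\in R$ can be written $a=e+u$ with $e$ a projection, $u\in U(R)$ and $eu=ue$. *)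

(* Defs.v *)
From mathcomp Require Import all_boot all_algebra.
Set Implicit Arguments. Unset Strict Implicit. Unset Printing Implicit Defensive.
Import GRing.Theory.
Local Open Scope ring_scope.

Section StarRings.
Variable R : pzRingType.

Definition is_involution (star : R -> R) : Prop :=
  [/\ forall a b, star (a + b) = star a + star b,
      forall a b, star (a * b) = star b * star a
    & forall a, star (star a) = a].

Definition is_unit (u : R) : Prop := exists v : R, u * v = 1 /\ v * u = 1.

Definition left_ideal (I : R -> Prop) : Prop :=
  [/\ I 0, forall x y, I x -> I y -> I (x + y) & forall r x, I x -> I (r * x)].

Definition maximal_left_ideal (I : R -> Prop) : Prop :=
  [/\ left_ideal I, ~ I 1 &
      forall I' : R -> Prop, left_ideal I' -> (forall x, I x -> I' x) ->
        (forall x, I' x <-> I x) \/ (forall x, I' x)].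

Definition jacobson (x : R) : Prop :=
  forall I : R -> Prop, maximal_left_ideal I -> I x.

Definition is_projection (star : R -> R) (e : R) : Prop :=
  e * e = e /\ star e = e.

Definition strongly_J_star_clean (star : R -> R) : Prop :=
  forall a : R, exists e u : R,
    [/\ is_projection star e, jacobson u, a = e + u & a * e = e * a].

Definition strongly_star_clean (star : R -> R) : Prop :=
  forall a : R, exists e u : R,
    [/\ is_projection star e, is_unit u, a = e + u & e * u = u * e].

End StarRings.

(* Main.v *)
Require Import Defs.
From mathcomp Require Import all_boot all_algebra.
From mathcomp Require boolp classical_sets.
From Stdlib Require Import Classical.
Set Implicit Arguments. Unset Strict Implicit. Unset Printing Implicit Defensive.
Import GRing.Theory.
Local Open Scope ring_scope.

Section Aux.
Variable R : pzRingType.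

Lemma J0 : jacobson (0 : R).
Proof. by move=> I [[]]. Qed.
Lemma JD (x y : R) : jacobson x -> jacobson y -> jacobson (x + y).
Proof. move=> hx hy I HI; case: (HI) => [[_ HD _] _ _]; exact: HD (hx I HI) (hy I HI). Qed.
Lemma JM (r x : R) : jacobson x -> jacobson (r * x).
Proof. move=> hx I HI; case: (HI) => [[_ _ HM] _ _]; exact: HM (hx I HI). Qed.
Lemma JN (x : R) : jacobson x -> jacobson (- x).
Proof. by move=> hx; rewrite -mulN1r; apply: JM. Qed.

Lemma unitM (a b : R) : is_unit a -> is_unit b -> is_unit (a * b).
Proof.
move=> [v [h1 h2]] [w [h3 h4]]; exists (w * v); split.
  by rewrite mulrA -(mulrA a) h3 mulr1.
by rewrite mulrA -(mulrA w) h2 mulr1.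
Qed.

Lemma unitN (a : R) : is_unit a -> is_unit (- a).
Proof. by move=> [v [h1 h2]]; exists (- v); rewrite !mulrNN. Qed.

Definition Pmax (a : R) (A : R -> Prop) := [/\ left_ideal A, ~ A 1 & forall r, A (r * a)].

Definition B (a x : R) := exists r, x = r * a.

Lemma exists_max (a : R) : ~ (exists w, w * a = 1) ->
  exists M, maximal_left_ideal M /\ M a.
Proof.
move=> Hna.
pose T := {A : R -> Prop | Pmax a A}.
pose Rel (s t : T) := boolp.asbool (forall x, proj1_sig s x -> proj1_sig t x).
have Bdef : forall x, B a x = exists r, x = r * a by [].
clear Bdef.
have [M HM] : exists t, forall s, Rel t s -> s = t.
  apply: (@classical_sets.Zorn T Rel).
  - by move=> t; apply/boolp.asboolP.
  - move=> r s t /boolp.asboolP h1 /boolp.asboolP h2; apply/boolp.asboolP.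
    by move=> x /h1 /h2.
  - move=> s t; case: s => s Ps; case: t => t Pt;
    move=> /boolp.asboolP /= h1 /boolp.asboolP /= h2.
    have est : s = t.
      by apply: boolp.funext => x; apply: boolp.propext; split; [apply: h1|apply: h2].
    by subst; congr exist; apply: boolp.Prop_irrelevance.
  move=> A Atot.
  pose U := fun x : R => B a x \/ exists s, A s /\ proj1_sig s x.
  have sD (s : T) x y : proj1_sig s x -> proj1_sig s y -> proj1_sig s (x + y).
    by have := proj2_sig s; rewrite /Pmax => -[[_ H _] _ _]; apply: H.
  have sM (s : T) r x : proj1_sig s x -> proj1_sig s (r * x).
    by have := proj2_sig s; rewrite /Pmax => -[[_ _ H] _ _]; apply: H.
  have s1 (s : T) : ~ proj1_sig s 1.
    by have := proj2_sig s; rewrite /Pmax => -[_ H _].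
  have inB (s : T) x : B a x -> proj1_sig s x.
    by have := proj2_sig s; rewrite /Pmax => -[_ _ H] [r ->]; apply: H.
  have PU : Pmax a U.
    split.
    - split.
      + by left; exists 0; rewrite mul0r.
      + move=> x y [[r ->]|[s [As sx]]] [[r' ->]|[t [At ty]]].
        * by left; exists (r + r'); rewrite mulrDl.
        * by right; exists t; split => //; apply: sD => //; apply: inB; exists r.
        * by right; exists s; split => //; apply: sD => //; apply: inB; exists r'.
        * have [/boolp.asboolP h|/boolp.asboolP h] := Atot s t As At.
            by right; exists t; split => //; apply: sD => //; apply: h.
          by right; exists s; split => //; apply: sD => //; apply: h.
      + move=> r x [[r' ->]|[s [As sx]]].
          by left; exists (r * r'); rewrite mulrA.
        by right; exists s; split => //; apply: sM.
    - move=> [[r h]|[s [_ hs]]]; first by apply: Hna; exists r.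
      exact: s1 hs.
    - by move=> r; left; exists r.
  exists (exist _ U PU) => s As; apply/boolp.asboolP => x sx /=.
  by right; exists s.
case: M HM => M [ML M1 Ma] HM.
exists M; split; last by rewrite -(mul1r a); apply: Ma.
split => // I' HI' MI'.
case: (classic (I' 1)) => [I1|nI1].
  by right => x; rewrite -(mulr1 x); case: HI' => _ _; apply.
left.
have PI' : Pmax a I' by split => // r; apply: MI'.
have := HM (exist _ I' PI'); rewrite /Rel /=.
move=> /(_ (introT (boolp.asboolP _) MI')) [->]; done.
Qed.


Lemma Jleft (j : R) : jacobson j -> exists w, w * (1 + j) = 1.
Proof.
move=> hj; apply: NNPP => hn.
have [M [HM M1j]] := exists_max hn.
case: (HM) => [[_ HD _] n1 _]; apply: n1.
have : M (1 + j + - j) by apply: HD => //; apply: (JN hj).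
by rewrite addrK.
Qed.

Lemma J2 (j : R) : jacobson j -> is_unit (1 + j).
Proof.
move=> hj; have [w hw] := Jleft hj.
have ew : w = 1 + - (w * j).
  by rewrite -hw mulrDr mulr1 addrK.
have [w' hw'] : exists w', w' * w = 1.
  rewrite ew. apply: (Jleft (j := - (w * j))). apply: JN. apply: JM. exact: hj.
have e1 : w' = 1 + j by rewrite -[w']mulr1 -{1}hw mulrA hw' mul1r.
by exists w; split => //; rewrite -e1.
Qed.

Lemma unitJ (u j : R) : is_unit u -> jacobson j -> is_unit (u + j).
Proof.
move=> [v [h1 h2]] hj.
have -> : u + j = u * (1 + v * j) by rewrite mulrDr mulr1 mulrA h1 mul1r.
apply: unitM; first by exists v.
by apply: J2; apply: JM.
Qed.

Lemma jac_char (x : R) : (forall r, is_unit (1 + r * x)) -> jacobson x.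
Proof.
move=> H M HM; apply: NNPP => nMx.
case: (HM) => [[M0 MD MM] n1 Hmax].
pose I' := fun y => exists m r, M m /\ y = m + r * x.
have LI : left_ideal I'.
  split.
  - by exists 0, 0; rewrite mul0r addr0.
  - move=> y z [m [r [Mm ->]]] [m' [r' [Mm' ->]]].
    exists (m + m'), (r + r'); split; first exact: MD.
    by rewrite mulrDl addrACA.
  - move=> r y [m [r' [Mm ->]]]; exists (r * m), (r * r'); split; first exact: MM.
    by rewrite mulrDr mulrA.
have sub : forall y, M y -> I' y by move=> y My; exists y, 0; rewrite mul0r addr0.
case: (Hmax I' LI sub) => [eq|all].
  by apply: nMx; apply/eq; exists 0, 1; rewrite add0r mul1r.
have [m [r [Mm e]]] := all 1.
have em : m = 1 + (- r) * x by rewrite e mulNr addrK.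
have [v [_ hv]] := H (- r).
apply: n1; rewrite -hv -em; exact: MM.
Qed.

Lemma jacobson_lemma (a b : R) : is_unit (1 + a * b) -> is_unit (1 + b * a).
Proof.
move=> [v [h1 h2]]; exists (1 - b * v * a); split.
  have e : a * b * v = 1 - v by rewrite -h1 mulrDl mul1r [v + _]addrC addrK.
  have k : b * a * (b * v * a) = b * (a * b * v) * a by rewrite !mulrA.
  rewrite e mulrBr mulr1 mulrBl in k.
  rewrite mulrDl mul1r mulrBr mulr1 k.
  by rewrite subKr subrK.
have e : v * (a * b) = 1 - v by rewrite -h2 mulrDr mulr1 [v + _]addrC addrK.
have k : b * v * a * (b * a) = b * (v * (a * b)) * a by rewrite !mulrA.
rewrite e mulrBr mulr1 mulrBl in k.
by rewrite mulrBl mul1r mulrDr mulr1 k subrKC addrK.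
Qed.


Variable star : R -> R.
Hypothesis Hstar : is_involution star.

Lemma starD x y : star (x + y) = star x + star y.
Proof. by case: Hstar. Qed.
Lemma starM x y : star (x * y) = star y * star x.
Proof. by case: Hstar. Qed.
Lemma starK x : star (star x) = x.
Proof. by case: Hstar. Qed.
Lemma star0 : star 0 = 0.
Proof. by apply: (@addrI _ (star 0)); rewrite -starD !addr0. Qed.
Lemma starN x : star (- x) = - star x.
Proof. by apply: (@addrI _ (star x)); rewrite -starD !subrr star0. Qed.
Lemma star1 : star 1 = 1.
Proof.
have h : star (star 1 * 1) = star 1 by rewrite starM starK mulr1.
by rewrite mulr1 starK in h.
Qed.
Lemma star_unit (u : R) : is_unit u -> is_unit (star u).
Proof.
move=> [v [h1 h2]]; exists (star v); split.
  by rewrite -starM h2 star1.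
by rewrite -starM h1 star1.
Qed.

Lemma J_star (x : R) : jacobson x -> jacobson (star x).
Proof.
move=> hx; apply: jac_char => r.
have -> : 1 + r * star x = star (1 + x * star r) by rewrite starD star1 starM starK.
apply: star_unit; apply: jacobson_lemma; apply: J2; exact: JM.
Qed.

Lemma J_mulr (x r : R) : jacobson x -> jacobson (x * r).
Proof.
move=> hx; rewrite -[x * r]starK starM; apply: J_star; apply: JM; exact: J_star.
Qed.

Lemma idem_unit (e : R) : e * e = e -> is_unit e -> e = 1.
Proof. by move=> he [v [h1 _]]; rewrite -h1 -{2}he -mulrA h1 mulr1. Qed.


Lemma two_of_J : strongly_J_star_clean star -> jacobson (1 + 1 : R).
Proof.
move=> H; have [e [u [[ee se] ju eq _]]] := H (-1).
have eu : e = - (1 + u) by apply/(addIr u); rewrite -eq opprD subrK.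
have e1 : e = 1 by apply: (idem_unit ee); rewrite eu; apply: unitN; apply: J2.
rewrite e1 in eq.
have -> : (1 + 1 : R) = - u by rewrite -[X in _ + X]opprK eq opprD addNKr.
exact: JN.
Qed.

Lemma idem2 (e : R) : e * e = e -> (e + e - 1) * (e + e - 1) = 1.
Proof.
move=> ee.
have h : e * (e + e - 1) = e by rewrite mulrBr mulrDr ee mulr1 addrK.
by rewrite mulrBl mul1r mulrDl h subKr.
Qed.


Lemma proj_compl (e : R) : is_projection star e -> is_projection star (1 - e).
Proof.
move=> [ee se]; split.
  by rewrite mulrBl mul1r mulrBr mulr1 ee subrr subr0.
by rewrite starD starN star1 se.
Qed.

Lemma fwd : strongly_J_star_clean star ->
  [/\ strongly_star_clean star,
      (forall a : R, jacobson (a + star a))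
    & (forall x : R, jacobson x <-> is_unit (1 + x * star x))].
Proof.
move=> H; have two := two_of_J H.
split.
- move=> a; have [e [u [[ee se] ju ea ca]]] := H a.
  exists (1 - e), (a - (1 - e)); split.
  + exact: proj_compl.
  + have -> : a - (1 - e) = (e + e - 1) + u.
      by rewrite ea opprB [LHS]addrAC addrA.
    apply: unitJ => //; exists (e + e - 1); split; exact: idem2.
  + by rewrite addrC subrK.
  + have c : GRing.comm (1 - e) (a - (1 - e)).
      apply: commrB; last exact: commr_refl.
      exact: commr_sym (commrB (commr1 a) ca).
    exact: c.
- move=> a; have [e [u [[ee se] ju ea ca]]] := H a.
  rewrite ea starD se addrACA.
  apply: JD; last exact: JD ju (J_star ju).
  by rewrite -{1 2}(mulr1 e) -mulrDr; apply: JM.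
- move=> x; split.
    by move=> hx; apply: J2; apply: JM; apply: J_star.
  move=> hu; have [e [u [[ee se] ju ex ca]]] := H x.
  have hj : jacobson (e * star u + (u * e + u * star u)).
    apply: JD; first by apply: JM; apply: J_star.
    by apply: JD; apply: J_mulr.
  have e' : 1 + x * star x = (1 + e) + (e * star u + (u * e + u * star u)).
    by rewrite ex starD se mulrDl !mulrDr ee !addrA.
  have u1 : is_unit (1 + e).
    have -> : 1 + e = (1 + x * star x) + - (e * star u + (u * e + u * star u)).
      by rewrite e' addrK.
    by apply: unitJ => //; apply: JN.
  have u2 : is_unit (1 - e).
    have -> : 1 - e = (1 + e) + - (e * (1 + 1)).
      by rewrite mulrDr mulr1 opprD addrA addrK.
    by apply: unitJ => //; apply: JN; apply: JM.
  have e0 : e = 0.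
    have := idem_unit (proj1 (proj_compl (conj ee se))) u2.
    by move/eqP; rewrite subr_eq addrC -subr_eq subrr eq_sym => /eqP.
  by rewrite ex e0 add0r.
Qed.


Lemma bwd :
  [/\ strongly_star_clean star,
      (forall a : R, jacobson (a + star a))
    & (forall x : R, jacobson x <-> is_unit (1 + x * star x))] ->
  strongly_J_star_clean star.
Proof.
move=> [sc h2 h3].
have two : jacobson (1 + 1 : R) by have := h2 1; rewrite star1.
move=> a; have [e [v [[ee se] uv ea cv]]] := sc a.
have Jx : jacobson (1 - v).
  apply/h3; set x := 1 - v.
  have -> : 1 + x * star x = (1 - x * x) + x * (x + star x) by rewrite (mulrDr x x (star x)) subrKA.
  apply: unitJ; last by apply: JM; apply: h2.
  have -> : 1 - x * x = v * (- v + (1 + 1)).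
    rewrite /x mulrBl mul1r mulrBr mulr1 mulrDr (mulrDr v 1 1) mulr1 mulrN.
    rewrite opprB addrC -addrA opprB subrK.
    by rewrite [LHS]addrAC addrC.
  apply: unitM => //; apply: unitJ => //; exact: unitN.
have ca : a * e = e * a.
  have c : GRing.comm e a by rewrite ea; apply: commrD; [exact: commr_refl | exact: cv].
  by rewrite c.
exists (1 - e), (a - (1 - e)); split.
- exact: proj_compl.
- have -> : a - (1 - e) = e * (1 + 1) + - (1 - v).
    by rewrite ea mulrDr mulr1 !opprB addrACA.
  by apply: JD; [apply: JM | apply: JN].
- by rewrite addrC subrK.
- exact: (commrB (commr1 a) ca).
Qed.

End Aux.

Theorem corollary3p5 (R : pzRingType) (star : R -> R) (Hstar : is_involution star) :
  strongly_J_star_clean star <->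
  [/\ strongly_star_clean star,
      (forall a : R, jacobson (a + star a))
    & (forall x : R, jacobson x <-> is_unit (1 + x * star x))].
Proof. by split; [apply: fwd | apply: bwd]. Qed.
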